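(* Let $R$ be a unital ring with involution, let $a\in R$ be core invertible, and let $b\in R$. Then the following conditions are equivalent: (1) $a\overset{\circledast}{\leq} b$; (2) there exists $p\in R$ with $p^2=p=p^{*}$ such that $a=pb$, $ap=bp$ and $aR=pR$; (3) there exists $p\in R$ with $p^2=p=p^{*}$ such that $a=pb$ and $ap=bp$; (4) there exists $p\in R$ with $p^2=p=p^{*}$ such that, writing $x_{11}=pxp$, $x_{12}=px(1-p)$, $x_{21}=(1-p)xp$, $x_{22}=(1-p)x(1-p)$ for $x\in R$, one has $a_{21}=0$, $a_{22}=0$, $b_{11}=a_{11}$, $b_{12}=a_{12}$ and $b_{21}=0$ (i.e. in matrix form relative to $p$, $a=\begin{pmatrix}a_1&a_2\\0&0\end{pmatrix}$ and $b=\begin{pmatrix}a_1&a_2\\0&b_4\end{pmatrix}$).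
   Context: $R$ is a ring with identity and an involution $x\mapsto x^{*}$. An element $a\in R$ is core invertible if there exists $x\in R$ with $axa=a$, $xR=aR$ and $Rx=Ra^{*}$; such $x$ is unique, called the core inverse of $a$ and denoted $a^{\circledast}$. For $a$ core invertible and $b\in R$, $a\overset{\circledast}{\leq} b$ means $a^{\circledast}a=a^{\circledast}b$ and $aa^{\circledast}=ba^{\circledast}$. $aR=\{ax:x\in R\}$. *)

(* Defs.v *)
From HB Require Import structures.
From mathcomp Require Import all_boot all_order all_algebra.
Set Implicit Arguments. Unset Strict Implicit. Unset Printing Implicit Defensive.
Import GRing.Theory.
Local Open Scope ring_scope.

Definition is_involution (R : pzRingType) (star : R -> R) : Prop :=
  (forall x y : R, star (x + y) = star x + star y) /\
  (forall x y : R, star (x * y) = star y * star x) /\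
  (forall x : R, star (star x) = x).

Definition rideal_eq (R : pzRingType) (x y : R) : Prop :=
  forall z : R, (exists u, z = x * u) <-> (exists v, z = y * v).

Definition lideal_eq (R : pzRingType) (x y : R) : Prop :=
  forall z : R, (exists u, z = u * x) <-> (exists v, z = v * y).

Definition is_core_inverse (R : pzRingType) (star : R -> R) (a x : R) : Prop :=
  a * x * a = a /\ rideal_eq x a /\ lideal_eq x (star a).

Definition core_invertible (R : pzRingType) (star : R -> R) (a : R) : Prop :=
  exists x, is_core_inverse star a x.

(* a <=core b : a^core a = a^core b and a a^core = b a^core.
   The core inverse is unique, so quantifying existentially over it
   refers to THE core inverse of a. *)
Definition core_le (R : pzRingType) (star : R -> R) (a b : R) : Prop :=
  exists x, is_core_inverse star a x /\ x * a = x * b /\ a * x = b * x.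

Definition is_projection (R : pzRingType) (star : R -> R) (p : R) : Prop :=
  p * p = p /\ p = star p.

(* Main.v *)
Require Import Defs.
From HB Require Import structures.
From mathcomp Require Import all_boot all_order all_algebra.
Import GRing.Theory.
Local Open Scope ring_scope.

Lemma core_props (R : pzRingType) (star : R -> R) (a x : R) :
  is_involution star -> is_core_inverse star a x ->
  [/\ a*x*a = a, x*a*x = x, star (a*x) = a*x, x*a*a = a
    & exists w, x = w * star a].
Proof.
move=> [sD [sM sK]] [axa [rx lx]].
have [u xu]: exists u, x = a*u by apply/(rx x); exists 1; rewrite mulr1.
have [v av]: exists v, a = x*v by apply/(rx a); exists 1; rewrite mulr1.
have [w xw]: exists w, x = w*star a by apply/(lx x); exists 1; rewrite mul1r.
have sa: star a = star a * star (a*x) by rewrite -sM axa.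
have xs: x * star (a*x) = x.
  have := congr1 (fun y => w * y) sa; rewrite /= mulrA -xw => H.
  by rewrite -H.
have e: a*x = a*x*star(a*x) by rewrite -mulrA xs.
have sadj: star (a*x) = a*x by rewrite {1}e sM sK -e.
have xax: x*a*x = x by rewrite -[RHS]xs sadj mulrA.
have xaa: x*a*a = a.
  have: x*a*(x*v) = x*v by rewrite !mulrA xax.
  by rewrite -av.
split => //; by exists w.
Qed.

Theorem theorem2p4 (R : pzRingType) (star : R -> R) (a b : R) :
  is_involution star -> core_invertible star a ->
  [/\ (core_le star a b <->
        exists p, [/\ is_projection star p, a = p * b, a * p = b * p
                    & rideal_eq a p]),
      ((exists p, [/\ is_projection star p, a = p * b, a * p = b * p
                    & rideal_eq a p]) <->
        exists p, [/\ is_projection star p, a = p * b & a * p = b * p])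
    & ((exists p, [/\ is_projection star p, a = p * b & a * p = b * p]) <->
        exists p, is_projection star p /\
          [/\ (1 - p) * a * p = 0, (1 - p) * a * (1 - p) = 0,
              p * b * p = p * a * p, p * b * (1 - p) = p * a * (1 - p)
            & (1 - p) * b * p = 0])].
Proof.
move=> inv [x0 cx0].
have [sD [sM sK]] := inv.
have h12 : core_le star a b -> exists p, [/\ is_projection star p, a = p * b,
    a * p = b * p & rideal_eq a p].
  move=> [x [cx [xab axb]]].
  have [axa xax sadj xaa _] := @core_props R star a _ inv cx.
  exists (a*x); split.
  - by split; [rewrite mulrA axa | rewrite sadj].
  - by rewrite -mulrA -xab mulrA axa.
  - have ->: b*(a*x) = b*x*(a*a)*x by rewrite -(mulrA b x) (mulrA x) xaa mulrA.
    by rewrite -axb !mulrA axa.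
  - move=> z; split=> [[u ->]|[v ->]].
      by exists (a*u); rewrite -{1}axa !mulrA.
    by exists (x*v); rewrite mulrA.
have h31 : (exists p, [/\ is_projection star p, a = p * b & a * p = b * p]) ->
    core_le star a b.
  move=> [p [[pp ps] apb abp]].
  have pa : p*a = a by rewrite apb mulrA pp.
  exists x0; split => //.
  have [axa xax sadj xaa [w xw]] := @core_props R star a _ inv cx0.
  have [_ [rx _]] := cx0.
  have [u xu]: exists u, x0 = a*u by apply/(rx x0); exists 1; rewrite mulr1.
  split.
    apply/eqP; rewrite -subr_eq0 -mulrBr xw {1}apb sM -ps -mulrA.
    by rewrite -(mulrA (star b)) mulrBr pa -apb subrr !mulr0.
  have ba : b*a = a*a by rewrite -{1}pa mulrA -abp -mulrA pa.
  by rewrite xu !mulrA ba.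
split.
- split; first exact: h12.
  move=> H; apply: h31.
  by move: H => [p [P1 P2 P3 _]]; exists p.
- split; first by move=> [p [P1 P2 P3 _]]; exists p.
  by move=> H; apply: h12; apply: h31.
split.
  move=> [p [[pp ps] apb abp]].
  have pa : p*a = a by rewrite apb mulrA pp.
  exists p; split => //; split.
  - by rewrite mulrBl mul1r pa subrr mul0r.
  - by rewrite mulrBl mul1r pa subrr mul0r.
  - by rewrite -apb pa.
  - by rewrite -apb pa.
  - by rewrite -mulrA -abp mulrA mulrBl mul1r pa subrr mul0r.
move=> [p [[pp ps] [e1 e2 e3 e4 e5]]].
have E : p + (1-p) = 1 by rewrite addrC subrK.
have pa : p*a = a.
  have : (1-p)*a* p + (1-p)*a*(1-p) = 0 by rewrite e1 e2 addr0.
  rewrite -mulrDr E mulr1 mulrBl mul1r => /eqP.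
  by rewrite subr_eq0 => /eqP <-.
exists p; split => //.
- have -> : p*b = p*b* p + p*b*(1-p) by rewrite -mulrDr E mulr1.
  by rewrite e3 e4 -mulrDr E mulr1 pa.
- have -> : b* p = p*b* p + (1-p)*b* p by rewrite -!mulrA -mulrDl E mul1r.
  by rewrite e5 addr0 e3 pa.
Qed.
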